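(* Every finite nonempty set of negative integers is the signed degree set of some connected signed bipartite graph.
   Context: A signed bipartite graph $G(U,V)$ is a finite simple bipartite graph with bipartition $U, V$ (both nonempty, every edge joining a vertex of $U$ to a vertex of $V$) in which each edge is assigned a sign, positive or negative. The signed degree of a vertex $x$ is $\mathrm{sdeg}(x) = d^+(x) - d^-(x)$, where $d^+(x)$ (resp. $d^-(x)$) is the number of positive (resp. negative) edges incident with $x$. The signed degree set of $G(U,V)$ is the set of distinct signed degrees of its vertices. $G(U,V)$ is called connected if each vertex of $U$ is connected (by a path) to every vertex of $V$. *)

(* Defs.v *)
From mathcomp Require Import all_boot all_order all_algebra.
Set Implicit Arguments. Unset Strict Implicit. Unset Printing Implicit Defensive.
Import GRing.Theory Num.Theory.

(* A signed bipartite graph with parts U and V: for each pair (u, v),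
   [g u v] is [None] (no edge), [Some true] (a positive edge) or
   [Some false] (a negative edge).  Simplicity (at most one edge between
   u and v) is built in. *)
Definition sbigraph (U V : finType) := U -> V -> option bool.

Section SignedBipartite.
Variables (U V : finType) (g : sbigraph U V).

Definition vertex := (U + V)%type.

Definition sadj : rel vertex := fun x y =>
  match x, y with
  | inl u, inr v => g u v != None
  | inr v, inl u => g u v != None
  | _, _ => false
  end.

Definition dplus (x : vertex) : nat :=
  match x with
  | inl u => #|[set v | g u v == Some true]|
  | inr v => #|[set u | g u v == Some true]|
  end.
Definition dminus (x : vertex) : nat :=
  match x with
  | inl u => #|[set v | g u v == Some false]|
  | inr v => #|[set u | g u v == Some false]|
  end.

Definition sdeg (x : vertex) : int := (dplus x)%:Z - (dminus x)%:Z.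

Definition sb_connected : Prop :=
  forall (u : U) (v : V), connect sadj (inl u) (inr v).

Definition in_sdeg_set (z : int) : Prop := exists x : vertex, sdeg x = z.

End SignedBipartite.

(* Main.v *)
Require Import Defs.
From mathcomp Require Import all_boot all_order all_algebra.
Import GRing.Theory Num.Theory.
Lemma card_lt (K a : nat) : a <= K -> #|[set l : 'I_K | l < a]| = a.
Proof.
move=> aK.
have -> : [set l : 'I_K | l < a] = [set widen_ord aK m | m : 'I_a].
  apply/setP => l; rewrite inE; apply/idP/imsetP.
    by move=> la; exists (Ordinal la) => //; apply/val_inj.
  by case=> m _ ->; rewrite /= ltn_ord.
rewrite card_imset ?card_ord //.
by move=> x y /(congr1 val) /= /val_inj.
Qed.

Lemma card_mod (K a : nat) (K0 : 0 < K) (k : nat) : a <= K ->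
  #|[set l : 'I_K | (k + l) %% K < a]| = a.
Proof.
move=> aK.
pose f (l : 'I_K) : 'I_K := Ordinal (ltn_pmod (k + l) K0).
have finj : injective f.
  move=> x y /(congr1 val) /= /eqP.
  rewrite eqn_modDl => /eqP; rewrite !modn_small ?ltn_ord //.
  by move=> /val_inj.
have -> : [set l : 'I_K | (k + l) %% K < a] = f @^-1: [set l : 'I_K | l < a].
  by apply/setP => l; rewrite !inE.
by rewrite card_preimset // card_lt.
Qed.

Lemma card_half (h : nat) (b : bool) :
  #|[set l : 'I_(h + h) | (l < h) == b]| = h.
Proof.
have hh : h <= h + h by rewrite leq_addr.
case: b.
  have -> : [set l : 'I_(h + h) | (l < h) == true] = [set l : 'I_(h + h) | l < h].
    by apply/setP => l; rewrite !inE eqb_id.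
  by rewrite card_lt.
have -> : [set l : 'I_(h + h) | (l < h) == false] = ~: [set l : 'I_(h + h) | l < h].
  by apply/setP => l; rewrite !inE eqbF_neg.
have := cardsC [set l : 'I_(h + h) | l < h].
by rewrite card_lt // card_ord => /eqP; rewrite eqn_add2l => /eqP.
Qed.

Definition av (S : seq int) (b : 'I_3 * 'I_(size S)) : nat := absz (nth 0%R S b.2).
Arguments av {S}.
Definition hh (S : seq int) : nat := \sum_(t < size S) absz (nth 0%R S t).
Notation KK S := (hh S + hh S).
Notation TT S := (('I_3 * 'I_(size S)) * 'I_(KK S))%type.
Definition gg (S : seq int) : sbigraph (TT S) (TT S) := fun u v =>
  if u.1 == v.1 then (if (u.2 + v.2) %% KK S < av u.1 then Some false else None)
  else Some ((u.2 < hh S) == (v.2 < hh S)).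

Lemma av_le S (b : 'I_3 * 'I_(size S)) : av b <= hh S.
Proof. by rewrite /hh (bigD1 b.2) //= leq_addr. Qed.

Lemma gg_sym S u v : gg S u v = gg S v u.
Proof.
rewrite /gg eq_sym addnC; case: eqP => [e|_]; first by rewrite e.
by rewrite eq_sym.
Qed.

Lemma dplus_row S u : dplus (gg S) (inl u) = (#|{: 'I_3 * 'I_(size S)}|.-1 * hh S)%N.
Proof.
rewrite /=.
have -> : [set v | gg S u v == Some true] =
   setX [set~ u.1] [set l : 'I_(KK S) | (l < hh S) == (u.2 < hh S)].
  apply/setP => -[b l]; rewrite !inE /gg /=.
  case: (u.1 =P b) => [<-|ne]; first by rewrite eqxx; case: ifP.
  have -> : (b != u.1) by apply/eqP => e; apply: ne; rewrite e.
  by case: (l < hh S); case: (u.2 < hh S).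
rewrite (cardsX [set~ u.1] [set l : 'I_(KK S) | (l < hh S) == (u.2 < hh S)]).
by rewrite cardsC1 card_half.
Qed.

Lemma dminus_row S u : dminus (gg S) (inl u) = (av u.1 + #|{: 'I_3 * 'I_(size S)}|.-1 * hh S)%N.
Proof.
rewrite /=.
have -> : [set v | gg S u v == Some false] =
   setX [set u.1] [set l : 'I_(KK S) | (u.2 + l) %% KK S < av u.1] :|:
   setX [set~ u.1] [set l : 'I_(KK S) | (l < hh S) == ~~ (u.2 < hh S)].
  apply/setP => -[b l]; rewrite !inE /gg /=.
  case: (u.1 =P b) => [<-|ne]; first by rewrite eqxx /=; case: ifP.
  have -> : (b != u.1) by apply/eqP => e; apply: ne; rewrite e.
  have -> : (b == u.1) = false by apply/eqP => e; apply: ne; rewrite e.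
  by rewrite /=; case: (l < hh S); case: (u.2 < hh S).
set A := setX [set u.1] [set l : 'I_(KK S) | (u.2 + l) %% KK S < av u.1].
set B := setX [set~ u.1] [set l : 'I_(KK S) | (l < hh S) == ~~ (u.2 < hh S)].
rewrite (cardsU A B).
have -> : A :&: B = set0.
  apply/setP => -[b l]; rewrite !inE /=.
  by case: (b == u.1); rewrite /= ?andbF.
rewrite cards0 subn0 (cardsX [set u.1]) (cardsX [set~ u.1]) cards1 cardsC1 card_half mul1n card_mod //.
  by apply: (leq_ltn_trans (leq0n u.2)).
by apply: (leq_trans (av_le _ u.1)); rewrite leq_addr.
Qed.

Local Open Scope ring_scope.

Lemma sdeg_row S u : sdeg (gg S) (inl u) = - (av u.1)%:Z.
Proof.
rewrite /sdeg dplus_row dminus_row PoszD.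
by rewrite opprD addrCA subrr addr0.
Qed.

Lemma sdeg_col S v : sdeg (gg S) (inr v) = - (av v.1)%:Z.
Proof.
rewrite -sdeg_row /sdeg /=.
have -> : [set u | gg S u v == Some true] = [set u | gg S v u == Some true].
  by apply/setP => u; rewrite !inE gg_sym.
have -> : [set u | gg S u v == Some false] = [set u | gg S v u == Some false].
  by apply/setP => u; rewrite !inE gg_sym.
by [].
Qed.
Local Close Scope ring_scope.

Definition nxt (c : 'I_3) : 'I_3 := Ordinal (ltn_pmod c.+1 (isT : 0 < 3)).

Lemma nxt_neq c : nxt c != c.
Proof. by case: c => [[|[|[|]]] H]. Qed.
Lemma nxt2_neq c : nxt (nxt c) != c.
Proof. by case: c => [[|[|[|]]] H]. Qed.

Lemma adj_lr S (u v : TT S) : u.1 != v.1 -> sadj (gg S) (inl u) (inr v).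
Proof. by move=> ne; rewrite /= /gg (negbTE ne). Qed.
Lemma adj_rl S (u v : TT S) : u.1 != v.1 -> sadj (gg S) (inr v) (inl u).
Proof. by move=> ne; rewrite /= /gg (negbTE ne). Qed.

Lemma pneq1 n (b : 'I_3 * 'I_n) : b != (nxt b.1, b.2).
Proof. by case: b => c t /=; rewrite xpair_eqE eqxx andbT eq_sym nxt_neq. Qed.
Lemma pneq2 n (b : 'I_3 * 'I_n) : b != (nxt (nxt b.1), b.2).
Proof. by case: b => c t /=; rewrite xpair_eqE eqxx andbT eq_sym nxt2_neq. Qed.

Lemma conn S : sb_connected (gg S).
Proof.
move=> u v; case: (eqVneq u.1 v.1) => [e|ne]; last by apply: connect1; apply: adj_lr.
pose w1 : TT S := ((nxt u.1.1, u.1.2), u.2).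
pose w2 : TT S := ((nxt (nxt u.1.1), u.1.2), u.2).
apply: (connect_trans (y := inr w1)).
  by apply: connect1; apply: adj_lr; apply: pneq1.
apply: (connect_trans (y := inl w2)).
  apply: connect1; apply: adj_rl; rewrite /w1 /w2 /=.
  by rewrite xpair_eqE eqxx andbT nxt_neq.
apply: connect1; apply: adj_lr; rewrite -e eq_sym.
exact: pneq2.
Qed.

Lemma hpos S : S != [::] -> all (fun z => (z < 0)%R) S -> 0 < hh S.
Proof.
case: S => [|z s] // _ /andP [zn _].
rewrite /hh (bigD1 ord0) //= ltn_addr // absz_gt0.
by rewrite ltr0_neq0.
Qed.

Local Open Scope ring_scope.

Lemma negabs (z : int) : z < 0 -> - (absz z)%:Z = z.
Proof. by move=> zn; rewrite abszE ltr0_norm // opprK. Qed.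

Theorem corollary2p1 (S : seq int) :
  S != [::] -> all (fun z => z < 0) S ->
  exists (U V : finType) (g : sbigraph U V),
    [/\ (0 < #|U|)%N, (0 < #|V|)%N, sb_connected g &
        forall z : int, z \in S <-> in_sdeg_set g z].
Proof.
move=> Sne Sneg.
have hp := hpos S Sne Sneg.
have Kp : (0 < KK S)%N by rewrite addn_gt0 hp.
have sp : (0 < size S)%N by case: (S) Sne.
pose k0 : 'I_(KK S) := Ordinal Kp.
pose t0 : 'I_(size S) := Ordinal sp.
have v0 : TT S := ((ord0, t0), k0).
have key : forall w : TT S, - (av w.1)%:Z = nth 0 S w.1.2.
  move=> w; apply: negabs; apply: (allP Sneg); exact: mem_nth.
exists (TT S), (TT S), (gg S); split.
- by apply/card_gt0P; exists v0.
- by apply/card_gt0P; exists v0.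
- exact: conn.
move=> z; split.
  move=> zS.
  have ti : (index z S < size S)%N by rewrite index_mem.
  exists (inl ((ord0, Ordinal ti), k0)).
  by rewrite sdeg_row key /= nth_index.
case=> -[] w <-; rewrite ?sdeg_row ?sdeg_col key; exact: mem_nth.
Qed.
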